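(* Let $S$ be a finite semigroup such that $\equiv_{\mathsf{RM}}$ is the equality relation. Then the minimal degree of a faithful action of $S$ on a set by partial transformations is realized by a semisimple action, i.e., there is a faithful semisimple partial $S$-set of cardinality equal to the least cardinality of a faithful partial $S$-set.
   Context: Semigroups act on the right. For a regular $\mathscr J$-class $J$ (one containing an idempotent): $s\equiv_{\mathsf{RM},J}t$ iff for all $x\in J$, $xs\in J\iff xt\in J$, and if both lie in $J$ then $xs=xt$; $\equiv_{\mathsf{RM}}=\bigcap_J\equiv_{\mathsf{RM},J}$ over regular $J$. A partial $S$-set is a finite set $\Omega$ with a right action by partial maps; faithful means distinct elements act as distinct partial maps. The strong orbit of $\alpha$ is $\mathscr O_\alpha=\{\beta\mid\alpha S^1=\beta S^1\}$; it is transitive if $\mathscr O_\alpha S\cap\mathscr O_\alpha\ne\emptyset$. $\Omega$ is semisimple if every strong orbit is transitive and $S$-invariant (if $\alpha\in\mathscr O$ and $\alpha s$ is defined then $\alpha s\in\mathscr O$). *)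

(* Defs.v *)
From mathcomp Require Import all_boot.
Set Implicit Arguments. Unset Strict Implicit. Unset Printing Implicit Defensive.

Section Semigroup.
Variables (S : finType) (mul : S -> S -> S).

(* s <=_J t  iff  s in S^1 t S^1 *)
Definition Jle (s t : S) : Prop :=
  s = t \/ (exists x, s = mul x t) \/ (exists y, s = mul t y)
  \/ (exists x y, s = mul (mul x t) y).

Definition Jeq (s t : S) : Prop := Jle s t /\ Jle t s.

Definition idempotent_el (e : S) : Prop := mul e e = e.

(* s ≡_{RM,J} t for J the J-class of j *)
Definition RMJ (j s t : S) : Prop :=
  forall x, Jeq x j ->
    (Jeq (mul x s) j <-> Jeq (mul x t) j) /\
    (Jeq (mul x s) j -> Jeq (mul x t) j -> mul x s = mul x t).

(* ≡_RM : intersection over regular J-classes (those containing an idempotent);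
   every regular J-class is the J-class of some idempotent e. *)
Definition RMeq (s t : S) : Prop :=
  forall e, idempotent_el e -> RMJ e s t.

Section PartialSet.
Variables (Omega : finType) (act : Omega -> S -> option Omega).

Definition is_partial_action : Prop :=
  forall a s t, act a (mul s t) = obind (fun b => act b t) (act a s).

Definition faithful : Prop :=
  forall s t, (forall a, act a s = act a t) -> s = t.

Definition reach (a b : Omega) : Prop := a = b \/ exists s, act a s = Some b.

Definition strong_orbit (a b : Omega) : Prop := reach a b /\ reach b a.

Definition orbit_transitive (a : Omega) : Prop :=
  exists b c s, strong_orbit a b /\ strong_orbit a c /\ act b s = Some c.

Definition orbit_invariant (a : Omega) : Prop :=
  forall b s c, strong_orbit a b -> act b s = Some c -> strong_orbit a c.

Definition semisimple : Prop :=
  forall a, orbit_transitive a /\ orbit_invariant a.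

End PartialSet.
End Semigroup.

(* Main.v *)
Require Import Defs.
From mathcomp Require Import all_boot.
From Stdlib Require Import Classical ClassicalEpsilon.
Set Implicit Arguments. Unset Strict Implicit. Unset Printing Implicit Defensive.

Definition pb (P : Prop) : bool := if excluded_middle_informative P then true else false.
Lemma pbP (P : Prop) : reflect P (pb P).
Proof. rewrite /pb; case: excluded_middle_informative => h; by constructor. Qed.

Lemma ex_min (P : nat -> Prop) : (exists n, P n) -> exists n, P n /\ forall m, P m -> n <= m.
Proof.
move=> [n Pn]; elim/ltn_ind: n Pn => n IH Pn.
case: (classic (exists m, P m /\ m < n)) => [[m [Pm lt]]|N]; first exact: IH m lt Pm.
exists n; split=> // m Pm; rewrite leqNgt; apply/negP=> lt; apply: N; eauto.
Qed.

Lemma opt_eq (T : Type) (o1 o2 : option T) : (forall b, o1 = Some b <-> o2 = Some b) -> o1 = o2.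
Proof.
case: o1 => [b|] H; first by symmetry; apply/H.
case: o2 H => [c|] H //; by have := proj2 (H c) erefl.
Qed.


Lemma act_reach (S Om : finType) (act : Om -> S -> option Om) a s b :
  act a s = Some b -> reach act a b.
Proof. by move=> h; right; exists s. Qed.

Lemma reach_trans (S : finType) (mul : S -> S -> S) (Om : finType) (act : Om -> S -> option Om) :
  is_partial_action mul act -> forall a b c, reach act a b -> reach act b c -> reach act a c.
Proof.
move=> pa a b c [->|[s hs]] // [<-|[t ht]]; first by right; exists s.
by right; exists (mul s t); rewrite pa hs.
Qed.

Lemma so_sym (S Om : finType) (act : Om -> S -> option Om) a b :
  strong_orbit act a b -> strong_orbit act b a.
Proof. by case. Qed.

Lemma so_trans (S : finType) (mul : S -> S -> S) (Om : finType) (act : Om -> S -> option Om) :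
  is_partial_action mul act -> forall a b c, strong_orbit act a b -> strong_orbit act b c -> strong_orbit act a c.
Proof.
move=> pa a b c [h1 h2] [h3 h4]; split; exact: reach_trans h1 h3 || exact: reach_trans h4 h2.
Qed.

Lemma tr_so (S : finType) (mul : S -> S -> S) (Om : finType) (act : Om -> S -> option Om) :
  is_partial_action mul act -> forall a a', orbit_transitive act a -> strong_orbit act a a' ->
  orbit_transitive act a'.
Proof.
move=> pa a a' [b [c [s [h1 [h2 h3]]]]] h.
exists b, c, s; split; [|split] => //; by apply: (so_trans pa (so_sym h)).
Qed.
Definition lm (S : Type) (mul : S -> S -> S) (a : option S) y := if a is Some a then mul a y else y.
Definition rm (S : Type) (mul : S -> S -> S) y (b : option S) := if b is Some b then mul y b else y.
Definition om (S : Type) (mul : S -> S -> S) (x y : option S) :=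
  match x, y with Some x, Some y => Some (mul x y) | Some x, None => Some x | None, y => y end.

Lemma Jle_nf (S : finType) (mul : S -> S -> S) s t :
  Jle mul s t <-> exists a b, s = rm mul (lm mul a t) b.
Proof.
split.
- case=> [->|[[x ->]|[[y ->]|[x [y ->]]]]].
  + by exists None, None.
  + by exists (Some x), None.
  + by exists None, (Some y).
  + by exists (Some x), (Some y).
- case=> a [b ->]; case: a => [a|]; case: b => [b|] /=; rewrite /Jle; eauto 6.
Qed.

Lemma Jle_trans (S : finType) (mul : S -> S -> S) : associative mul ->
  forall s t u, Jle mul s t -> Jle mul t u -> Jle mul s u.
Proof.
move=> mA s t u /Jle_nf [a [b ->]] /Jle_nf [c [d ->]]; apply/Jle_nf.
exists (om mul a c), (om mul d b).
by case: a => [?|]; case: b => [?|]; case: c => [?|]; case: d => [?|] /=; rewrite ?mA.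
Qed.

Definition RI (S : finType) (mul : S -> S -> S) (y : S) : {set S} := y |: (mul y @: [set: S]).

Lemma in_RI (S : finType) (mul : S -> S -> S) z y :
  reflect (z = y \/ exists w, z = mul y w) (z \in RI mul y).
Proof.
rewrite /RI in_setU1; apply: (iffP orP) => [[/eqP->|/imsetP[w _ ->]]|[->|[w ->]]].
- by left.
- by right; exists w.
- by left.
- by right; apply/imsetP; exists w.
Qed.

Lemma stab (S : finType) (mul : S -> S -> S) : associative mul ->
  forall x s, Jle mul x (mul x s) -> x = mul x s \/ exists u, x = mul (mul x s) u.
Proof.
move=> mA x s /Jle_nf [[a|] [b E0]]; last first.
  by case: b E0 => [b|] /= E; [right; exists b|left].
set y := mul x s in E0 *.
have E : x = mul a (rm mul y b) by case: b E0 => [b|] /= ->; rewrite ?mA.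
have s1 : RI mul y \subset RI mul x.
  apply/subsetP=> z /in_RI [->|[w ->]]; apply/in_RI; right; first by exists s.
  by exists (mul s w); rewrite /y mA.
have s2 : RI mul x \subset mul a @: RI mul y.
  apply/subsetP=> z /in_RI [->|[w ->]]; apply/imsetP.
    exists (rm mul y b); last exact: E.
    apply/in_RI; case: b {E E0} => [b|] /=; [right; by exists b | by left].
  exists (mul (rm mul y b) w); last by rewrite E /= mA.
  apply/in_RI; right; case: b {E E0} => [b|] /=; last by exists w.
  by exists (mul b w); rewrite mA.
have c1 := subset_leq_card s2.
have c2 := leq_imset_card (mul a) (RI mul y).
have /eqP eqR : RI mul y == RI mul x by rewrite eqEcard s1 (leq_trans c1 c2).
have : x \in RI mul y by rewrite eqR; apply/in_RI; left.
case/in_RI => [->|[w ->]]; [by left| by right; exists w].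
Qed.

Definition trb (S Om : finType) (act : Om -> S -> option Om) (a : Om) := pb (orbit_transitive act a).

Definition act2 (S Om : finType) (act : Om -> S -> option Om) (a : {x : Om | trb act x}) (s : S)
  : option {x : Om | trb act x} :=
  obind (fun b => if pb (strong_orbit act (val a) b) then insub b else None) (act (val a) s).
Arguments act2 [S Om] act a s.

Lemma act2P (S Om : finType) (act : Om -> S -> option Om) a s b :
  act2 act a s = Some b <-> act (val a) s = Some (val b) /\ strong_orbit act (val a) (val b).
Proof.
split.
- rewrite /act2; case E: (act (val a) s) => [c|] //=; case: pbP => h //.
  case: insubP => [u _ eu|_] // [eb]; by subst b; rewrite /= eu.
- case=> E h; rewrite /act2 E /=; case: pbP => // _; by rewrite valK.
Qed.

Lemma keyK (S : finType) (mul : S -> S -> S) (Om : finType) (act : Om -> S -> option Om) :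
  is_partial_action mul act -> forall a s t c, act a (mul s t) = Some c -> strong_orbit act a c ->
  exists b, [/\ act a s = Some b, act b t = Some c & strong_orbit act a b].
Proof.
move=> pa a s t c; rewrite pa; case E: (act a s) => [b|] //= h so.
exists b; split => //; split; first exact: act_reach E.
exact: reach_trans pa _ _ _ (act_reach h) so.2.
Qed.

Lemma so_refl (S Om : finType) (act : Om -> S -> option Om) a : strong_orbit act a a.
Proof. by split; left. Qed.

Lemma in2 (S : finType) (mul : S -> S -> S) (Om : finType) (act : Om -> S -> option Om) :
  is_partial_action mul act -> forall (a : {x : Om | trb act x}) b,
  strong_orbit act (val a) b -> trb act b.
Proof.
move=> pa a b h; apply/pbP; apply: (tr_so pa _ h).
by case: a {h} => a /= /pbP.
Qed.

Lemma act2_pa (S : finType) (mul : S -> S -> S) (Om : finType) (act : Om -> S -> option Om) :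
  is_partial_action mul act -> is_partial_action mul (act2 act).
Proof.
move=> pa a s t; apply: opt_eq => c; rewrite act2P; split.
- case=> E h; have [b0 [E1 E2 sb]] := keyK pa E h.
  have tb := in2 pa sb.
  have -> : act2 act a s = Some (exist _ b0 tb) by apply/act2P.
  apply/act2P => /=; split => //.
  exact: so_trans pa _ _ _ (so_sym sb) h.
- case E: (act2 act a s) => [b|] //= h2.
  move/act2P: E => [E1 so1]; move/act2P: h2 => [E2 so2].
  split; first by rewrite pa E1 /= E2.
  exact: so_trans pa _ _ _ so1 so2.
Qed.

Lemma reach2 (S : finType) (mul : S -> S -> S) (Om : finType) (act : Om -> S -> option Om) :
  is_partial_action mul act -> forall a b,
  reach (act2 act) a b <-> strong_orbit act (val a) (val b).
Proof.
move=> pa a b; split.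
- case=> [->|[s /act2P [_ h]]] //; exact: so_refl.
- move=> h; case: (h) => r1 r2; case: r1 => [e|[s hs]].
  + by left; apply: val_inj.
  + by right; exists s; apply/act2P.
Qed.

Lemma so2 (S : finType) (mul : S -> S -> S) (Om : finType) (act : Om -> S -> option Om) :
  is_partial_action mul act -> forall a b,
  strong_orbit (act2 act) a b <-> strong_orbit act (val a) (val b).
Proof.
move=> pa a b; split.
- by case=> /(reach2 pa).
- move=> h; split; apply/(reach2 pa) => //; exact: so_sym.
Qed.

Lemma act2_ss (S : finType) (mul : S -> S -> S) (Om : finType) (act : Om -> S -> option Om) :
  is_partial_action mul act -> semisimple (act2 act).
Proof.
move=> pa a; split.
- have := valP a => /pbP [b [c [s [hb [hc h]]]]].
  have tb := in2 pa hb; have tc := in2 pa hc.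
  exists (exist _ b tb), (exist _ c tc), s; split; [|split].
  + by apply/(so2 pa).
  + by apply/(so2 pa).
  + apply/act2P => /=; split => //; exact: so_trans pa _ _ _ (so_sym hb) hc.
- move=> b s c /(so2 pa) h /act2P [_ h2]; apply/(so2 pa).
  exact: so_trans pa _ _ _ h h2.
Qed.

Lemma C1 (S : finType) (mul : S -> S -> S) (Om : finType) (act : Om -> S -> option Om) :
  is_partial_action mul act -> forall s t,
  (forall a, act2 act a s = act2 act a t) ->
  forall x, (x = mul x s \/ exists u, x = mul (mul x s) u) ->
  forall g d, act g (mul x s) = Some d -> act g (mul x t) = Some d.
Proof.
move=> pa s t H x hx g d.
have ex : forall e, act g (mul x e) = obind (fun b => act b e) (act g x) by move=> e; rewrite pa.
rewrite !ex; case E: (act g x) => [h|] //= hs.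
have shd : strong_orbit act h d.
  split; first exact: act_reach hs.
  case: hx => [Hx|[u Hx]].
  - have : act g x = act g (mul x s) by rewrite -Hx.
    by rewrite ex E /= hs => -[->]; left.
  - have : act g x = act g (mul (mul x s) u) by rewrite -Hx.
    rewrite pa ex E /= hs /= => e2; exact: act_reach (esym e2).
have th : trb act h by apply/pbP; exists h, d, s; split; [exact: so_refl|split].
have td : trb act d.
  apply/pbP; apply: (tr_so pa _ shd); exact/pbP.
have := (proj2 (act2P (exist _ h th) s (exist _ d td))) (conj hs shd).
by rewrite H => /act2P [/= ->].
Qed.

Lemma C2 (S : finType) (mul : S -> S -> S) (Om : finType) (act : Om -> S -> option Om) :
  is_partial_action mul act -> faithful act -> forall s t,
  (forall a, act2 act a s = act2 act a t) ->
  forall x, (x = mul x s \/ exists u, x = mul (mul x s) u) ->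
  (x = mul x t \/ exists u, x = mul (mul x t) u).
Proof.
move=> pa fa s t H x hx.
have c1 := C1 pa H hx.
case: (hx) => [Hx|[u Hx]].
- left; apply: fa => g; case E: (act g x) => [h|].
  + have : act g (mul x s) = Some h by rewrite -Hx.
    by move/c1 => ->.
  + by rewrite pa E.
- right; exists u; apply: fa => g; case E: (act g x) => [h|].
  + move: E; rewrite {1}Hx pa; case E2: (act g (mul x s)) => [d|] //= hu.
    by rewrite pa (c1 _ _ E2) /= hu.
  + by rewrite pa pa E.
Qed.

Lemma faith2 (S : finType) (mul : S -> S -> S) (Om : finType) (act : Om -> S -> option Om) :
  associative mul -> is_partial_action mul act -> faithful act -> forall s t,
  (forall a, act2 act a s = act2 act a t) -> RMeq mul s t.
Proof.
move=> mA pa fa.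
have half : forall s t, (forall a, act2 act a s = act2 act a t) -> forall x e,
    Jeq mul x e -> Jeq mul (mul x s) e ->
    [/\ Jeq mul (mul x t) e, (x = mul x s \/ exists u, x = mul (mul x s) u)
      & (x = mul x t \/ exists u, x = mul (mul x t) u)].
  move=> s t H x e [J1 J2] [J3 J4].
  have hx := stab mA (Jle_trans mA J1 J4).
  have hx' := C2 pa fa H hx.
  split => //; split.
  + apply: Jle_trans mA _ _ _ _ J1; by right; right; left; exists t.
  + apply: Jle_trans mA _ _ _ J2 _.
    case: hx' => [E|[u E]]; first by left.
    by right; right; left; exists u.
move=> s t H e _ x Jx.
have H' : forall a, act2 act a t = act2 act a s by move=> a; rewrite H.
split.
- split=> h; [by case: (half s t H x e Jx h) | by case: (half t s H' x e Jx h)].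
- move=> h1 _; case: (half s t H x e Jx h1) => _ hx hx'.
  apply: fa => g; apply: opt_eq => d; split.
  + have := C1 pa H hx. exact.
  + have := C1 pa H' hx'. exact.
Qed.

Theorem corollary2p3 (S : finType) (mul : S -> S -> S)
    (mulA : associative mul)
    (hRM : forall s t, RMeq mul s t -> s = t) :
  exists (Omega : finType) (act : Omega -> S -> option Omega),
    [/\ is_partial_action mul act, faithful act, semisimple act &
      forall (Omega' : finType) (act' : Omega' -> S -> option Omega'),
        is_partial_action mul act' -> faithful act' -> #|Omega| <= #|Omega'|].
Proof.
pose P n := exists (Om : finType) (act : Om -> S -> option Om),
  [/\ #|Om| = n, is_partial_action mul act & faithful act].
have [n [[Om [act [cE pa fa]]] mn]] : exists n, P n /\ forall m, P m -> n <= m.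
  apply: ex_min.
  exists #|{: option S}|, (option S).
  exists (fun (o : option S) s => Some (Some (if o is Some a then mul a s else s))).
  split => //.
  - by move=> [a|] s t /=; rewrite ?mulA.
  - by move=> s t /(_ None) [].
exists {x : Om | trb act x}, (act2 act); split.
- exact: act2_pa.
- by move=> s t H; apply: hRM; exact: faith2 mulA pa fa s t H.
- exact: act2_ss.
- move=> Om' act' pa' fa'.
  rewrite card_sig; apply: leq_trans (max_card _) _; rewrite cE; apply: mn.
  by exists Om', act'.
Qed.
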